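(* Let $S_1=(x_1,y_1),S_2=(x_2,y_2),S_3=(x_3,y_3),S_4=(x_4,y_4)$ be four points in the plane with $x_1\le x_2\le x_3\le x_4$. Let $\delta_1,\delta_2,\delta_3,\delta_4$ be positive integers, where $\delta_j$ is the number of times $S_j$ occurs in the data. For $i\in\{1,\dots,4\}$ define the pivot point $P_i=(\tilde x_i,\tilde y_i)$ by $$\tilde x_i=x_i+\frac{\sum_{j=1}^4\delta_j(x_j-x_i)^2}{\sum_{j=1}^4\delta_j(x_j-x_i)},\qquad \tilde y_i=y_i+\frac{\sum_{j=1}^4\delta_j(x_j-x_i)(y_j-y_i)}{\sum_{j=1}^4\delta_j(x_j-x_i)},$$ whenever the denominator is nonzero. Then, whenever defined, $P_4$ lies in the closed triangle (convex hull) with vertices $S_1,S_2,S_3$, and $P_1$ lies in the closed triangle (convex hull) with vertices $S_2,S_3,S_4$. That is, the pivot points of an outermost point on the $x$-axis lie in the triangle formed by the other three points.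
   Context: The pivot point $P_i$ is the point through which the least-squares regression line of the data, in which each $S_j$ appears $\delta_j$ times, always passes regardless of how many additional copies of $S_i$ are added. It is considered undefined (at infinity) when $\sum_j\delta_j(x_j-x_i)=0$. *)

(* Defs.v *)
From mathcomp Require Import all_boot all_order all_algebra.
Set Implicit Arguments. Unset Strict Implicit. Unset Printing Implicit Defensive.
Import Order.TTheory GRing.Theory Num.Theory.
Local Open Scope ring_scope.

(* Data: four points S_j = (x j, y j), j : 'I_4 (0-based: S_1 = index 0),
   with multiplicities d j : nat (positive). *)

Definition pivot_den (R : realFieldType) (x : 'I_4 -> R) (d : 'I_4 -> nat)
  (i : 'I_4) : R := \sum_(j < 4) (d j)%:R * (x j - x i).

Definition pivot_x (R : realFieldType) (x : 'I_4 -> R) (d : 'I_4 -> nat)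
  (i : 'I_4) : R :=
  x i + (\sum_(j < 4) (d j)%:R * (x j - x i) ^+ 2) / pivot_den x d i.

Definition pivot_y (R : realFieldType) (x y : 'I_4 -> R) (d : 'I_4 -> nat)
  (i : 'I_4) : R :=
  y i + (\sum_(j < 4) (d j)%:R * (x j - x i) * (y j - y i)) / pivot_den x d i.

Definition in_triangle (R : realFieldType) (px py ax ay bx by_ cx cy : R) : Prop :=
  exists a b c : R, [/\ 0 <= a, 0 <= b, 0 <= c & a + b + c = 1] /\
    px = a * ax + b * bx + c * cx /\ py = a * ay + b * by_ + c * cy.

Definition s1 : 'I_4 := @Ordinal 4 0 isT.
Definition s2 : 'I_4 := @Ordinal 4 1 isT.
Definition s3 : 'I_4 := @Ordinal 4 2 isT.
Definition s4 : 'I_4 := @Ordinal 4 3 isT.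

(* Main.v *)
Require Import Defs.
From mathcomp Require Import all_boot all_order all_algebra.
From mathcomp Require Import ring lra.
Import Order.TTheory GRing.Theory Num.Theory.
Local Open Scope ring_scope.

Lemma sum4 (R : realFieldType) (F : 'I_4 -> R) :
  \sum_(j < 4) F j = F s1 + F s2 + F s3 + F s4.
Proof. rewrite !big_ord_recl big_ord0 addr0 !addrA; congr (_+_+_+_); congr F; exact: val_inj. Qed.

Theorem proposition2 (R : realFieldType) (x y : 'I_4 -> R) (d : 'I_4 -> nat) :
  (forall j, (0 < d j)%N) ->
  x s1 <= x s2 -> x s2 <= x s3 -> x s3 <= x s4 ->
  (pivot_den x d s4 != 0 ->
     in_triangle (pivot_x x d s4) (pivot_y x y d s4)
       (x s1) (y s1) (x s2) (y s2) (x s3) (y s3)) /\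
  (pivot_den x d s1 != 0 ->
     in_triangle (pivot_x x d s1) (pivot_y x y d s1)
       (x s2) (y s2) (x s3) (y s3) (x s4) (y s4)).
Proof.
move=> dpos.
have a0 : forall j, 0 <= (d j)%:R :> R by move=> j; exact: ler0n.
rewrite /pivot_x /pivot_y /pivot_den !sum4.
move: (a0 s1) (a0 s2) (a0 s3) (a0 s4).
move: (d s1)%:R (d s2)%:R (d s3)%:R (d s4)%:R => a1 a2 a3 a4.
move: (x s1) (x s2) (x s3) (x s4) (y s1) (y s2) (y s3) (y s4) => x1 x2 x3 x4 y1 y2 y3 y4.
move=> p1 p2 p3 p4 h12 h23 h34; split=> hD.
{ have u1 : 0 <= x4 - x1 by rewrite subr_ge0; lra.
  have u2 : 0 <= x4 - x2 by rewrite subr_ge0; lra.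
  have u3 : 0 <= x4 - x3 by rewrite subr_ge0; lra.
  have eD : a1 * (x1 - x4) + a2 * (x2 - x4) + a3 * (x3 - x4) + a4 * (x4 - x4)
     = - (a1 * (x4 - x1) + a2 * (x4 - x2) + a3 * (x4 - x3)) by ring.
  rewrite eD in hD *.
  have [D HD] : exists D, a1 * (x4 - x1) + a2 * (x4 - x2) + a3 * (x4 - x3) = D by eexists.
  rewrite HD in hD *.
  have Dge : 0 <= D by rewrite -HD; apply: addr_ge0; [apply: addr_ge0|]; exact: mulr_ge0.
  have Dpos : 0 < D.
    rewrite lt_def Dge andbT; apply/eqP=> E; move: hD; rewrite E oppr0 eqxx //.
  have DN : D != 0 by rewrite gt_eqF.
  have nn : forall a u, 0 <= a -> 0 <= u -> 0 <= a * u / D.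
    by move=> a u ha hu; apply: divr_ge0 (ltW Dpos); apply: mulr_ge0.
  exists (a1 * (x4 - x1) / D), (a2 * (x4 - x2) / D), (a3 * (x4 - x3) / D).
  split; [split|split]; rewrite ?nn //; have DN0 : D != 0 by rewrite gt_eqF.
  all: rewrite -?HD; field; rewrite ?oppr_eq0 ?HD //. }
{ have v1 : 0 <= x2 - x1 by rewrite subr_ge0; lra.
  have v2 : 0 <= x3 - x1 by rewrite subr_ge0; lra.
  have v3 : 0 <= x4 - x1 by rewrite subr_ge0; lra.
  have eD : a1 * (x1 - x1) + a2 * (x2 - x1) + a3 * (x3 - x1) + a4 * (x4 - x1)
     = a2 * (x2 - x1) + a3 * (x3 - x1) + a4 * (x4 - x1) by ring.
  rewrite eD in hD *.
  have [D HD] : exists D, a2 * (x2 - x1) + a3 * (x3 - x1) + a4 * (x4 - x1) = D by eexists.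
  rewrite HD in hD *.
  have Dge : 0 <= D by rewrite -HD; apply: addr_ge0; [apply: addr_ge0|]; exact: mulr_ge0.
  have Dpos : 0 < D by rewrite lt_def Dge andbT.
  have nn : forall a u, 0 <= a -> 0 <= u -> 0 <= a * u / D.
    by move=> a u ha hu; apply: divr_ge0 (ltW Dpos); apply: mulr_ge0.
  exists (a2 * (x2 - x1) / D), (a3 * (x3 - x1) / D), (a4 * (x4 - x1) / D).
  split; [split|split]; rewrite ?nn //; have DN0 : D != 0 by rewrite gt_eqF.
  all: rewrite -?HD; field; rewrite ?oppr_eq0 ?HD //. }
Qed.
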